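(* Let $r$ be an odd prime, $p=2r$, and $\mu_i=(-1)^iA_p^{i(i+2)}$. For distinct $i,j\in\{0,1,\dots,r-2\}$, up to a unit of $\mathcal{O}_p$: (1) $\mu_i-\mu_j\sim 1$ if $i\not\equiv j\pmod 2$ and $(j-i)(i+j+2)\not\equiv0\pmod r$; (2) $\mu_i-\mu_j\sim\sqrt2$ if $i\not\equiv j\pmod 2$ and $(j-i)(i+j+2)\equiv0\pmod r$; (3) $\mu_i-\mu_j\sim 1+\alpha_p^4$ if $i\equiv j\pmod 2$.
   Context: $\alpha_p=e^{2\pi i/(4p)}$, $A_p=\alpha_p^2$, $\mathcal{O}_p=\mathbb{Z}[\alpha_p]$. $\mu_i$ is the eigenvalue of the twist map on the basis element $e_i$ of the Kauffman skein module of the solid torus, $0\le i\le d_p-1=r-2$. $a\sim b$ means $a/b$ is a unit of $\mathcal{O}_p$. *)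

(* Defs.v *)
From mathcomp Require Import all_boot all_order all_algebra all_field.
Set Implicit Arguments. Unset Strict Implicit. Unset Printing Implicit Defensive.
Import Order.TTheory GRing.Theory Num.Theory.
Local Open Scope ring_scope.

(* alpha_p = e^{2 pi i/(4p)}; with p = 2r this is e^{i pi/(4r)}, which is
   (4r).-root (-1) in algC (the n-th root of -1 of minimal nonnegative argument). *)
Definition alpha_p (p : nat) : algC := (2 * p)%N.-root (-1).
Definition A_p (p : nat) : algC := alpha_p p ^+ 2.

Definition in_Op (p : nat) (x : algC) : Prop :=
  exists q : {poly int}, x = (map_poly intr q).[alpha_p p].

Definition unit_Op (p : nat) (u : algC) : Prop :=
  in_Op p u /\ u != 0 /\ in_Op p u^-1.

Definition assoc_Op (p : nat) (a b : algC) : Prop :=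
  b != 0 /\ unit_Op p (a / b).

Definition mu (p i : nat) : algC := (-1) ^+ i * A_p p ^+ (i * (i + 2)).

(* Main.v *)
Require Import Defs.
From mathcomp Require Import all_boot all_order all_algebra all_field.
From mathcomp Require Import ring lra zify.
Import Order.TTheory GRing.Theory Num.Theory.
Local Open Scope ring_scope.

Section O.
Variable p : nat.
Local Notation a := (alpha_p p).

Lemma Op_add x y : in_Op p x -> in_Op p y -> in_Op p (x + y).
Proof. by move=> [q1 ->] [q2 ->]; exists (q1 + q2); rewrite rmorphD hornerD. Qed.
Lemma Op_mul x y : in_Op p x -> in_Op p y -> in_Op p (x * y).
Proof. by move=> [q1 ->] [q2 ->]; exists (q1 * q2); rewrite rmorphM hornerM. Qed.
Lemma Op_opp x : in_Op p x -> in_Op p (- x).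
Proof. by move=> [q1 ->]; exists (- q1); rewrite rmorphN hornerN. Qed.
Lemma Op_int (n : int) : in_Op p n%:~R.
Proof. by exists n%:P; rewrite map_polyC hornerC. Qed.
Lemma Op_1 : in_Op p 1.
Proof. by have := Op_int 1. Qed.
Lemma Op_a : in_Op p a.
Proof. by exists 'X; rewrite map_polyX hornerX. Qed.
Lemma Op_exp x k : in_Op p x -> in_Op p (x ^+ k).
Proof. move=> hx; elim: k => [|k IH]; first exact: Op_1. by rewrite exprS; apply: Op_mul. Qed.
Lemma Op_sum n (F : nat -> algC) : (forall k, in_Op p (F k)) -> in_Op p (\sum_(k < n) F k).
Proof.
move=> hF; apply: (big_ind (in_Op p)) => //; first by have := Op_int 0.
by move=> *; apply: Op_add.
Qed.
End O.

Section U.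
Variable p : nat.
Lemma unit_mul u v : unit_Op p u -> unit_Op p v -> unit_Op p (u * v).
Proof.
move=> [hu [u0 hu']] [hv [v0 hv']]; split; first exact: Op_mul.
by split; [rewrite mulf_neq0 | rewrite invfM; apply: Op_mul].
Qed.
Lemma unit_N1 : unit_Op p (-1).
Proof. have h := @Op_opp p _ (Op_1 p); split=> //; split; first by rewrite oppr_eq0 oner_eq0. by rewrite invrN1. Qed.

Lemma unit_of u v : in_Op p u -> in_Op p v -> u * v = 1 -> unit_Op p u.
Proof.
move=> hu hv uv; have u0 : u != 0 by apply: contra_eq_neq uv => ->; rewrite mul0r eq_sym oner_eq0.
have e : u^-1 = v by rewrite -(mulKf u0 v) uv mulr1.
by split=> //; split=> //; rewrite e.
Qed.

Lemma geom (x : algC) c : 1 - x ^+ c = (1 - x) * \sum_(t < c) x ^+ t.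
Proof. by rewrite -opprB subrX1 -mulNr opprB. Qed.

Lemma assoc_pow x c d : in_Op p x -> x != 1 -> (x ^+ c) ^+ d = x ->
  exists u, unit_Op p u /\ 1 - x ^+ c = u * (1 - x).
Proof.
move=> hx x1 hcd; exists (\sum_(t < c) x ^+ t); split; last by rewrite geom mulrC.
apply: (@unit_of _ (\sum_(t < d) (x ^+ c) ^+ t)); try (apply: Op_sum => k; apply: Op_exp; try apply: Op_exp; done).
have h0 : 1 - x != 0 by rewrite subr_eq0 eq_sym.
apply: (mulfI h0); rewrite mulr1 mulrA -geom -geom hcd //.
Qed.
End U.
Lemma sum_pow0 (w : algC) r j : (8*r).-primitive_root w -> (0 < 2*j < 8*r)%N ->
  \sum_(k < 4*r) (w ^+ (2*k+1)) ^+ j = 0.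
Proof.
move=> pw /andP[j0 jr].
have q1 : w ^+ (2*j) != 1.
  rewrite -(expr0 w) (eq_prim_root_expr pw) mod0n modn_small //. by rewrite -lt0n.
rewrite (eq_bigr (fun k : 'I_(4*r) => w ^+ j * (w ^+ (2*j)) ^+ k)); last first.
  by move=> k _; rewrite -!exprM -exprD; congr (_ ^+ _); nia.
rewrite -mulr_sumr.
have : (w ^+ (2*j)) ^+ (4*r) - 1 = 0.
  have e : (2*j*(4*r) = 8*r*j)%N by nia.
  by rewrite -exprM e exprM (prim_expr_order pw) expr1n subrr.
rewrite subrX1 => /eqP; rewrite mulf_eq0 subr_eq0 (negbTE q1) /= => /eqP ->.
by rewrite mulr0.
Qed.

Lemma alpha8 r : prime r -> odd r -> ((4*r)%N.-root (-1:algC)) ^+ 8 != 1.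
Proof.
move=> pr oddr; set n := (4*r)%N; set a := n.-root (-1 : algC).
have r2 : (2 < r)%N.
  have := prime_gt1 pr; rewrite leq_eqVlt => /orP[/eqP r2|//]. by rewrite -r2 in oddr.
have n0 : (0 < n)%N by rewrite /n; lia.
have an : a ^+ n = -1 := rootCK n0 (-1).
apply/negP => /eqP a8.
have a4 : a ^+ 4 = -1.
  have e : n = (4 + 8 * (r./2))%N.
    rewrite /n; have := odd_double_half r; rewrite oddr -muln2 => h; lia.
  by rewrite -an e exprD exprM a8 expr1n mulr1.
have h8 : (0 < 8 * r)%N by lia.
have [w pw] := C_prim_root_exists h8.
have w4 : w ^+ n = -1.
  have : (w ^+ n) ^+ 2 == 1.
    by rewrite -exprM (_ : (n * 2 = 8 * r)%N) ?(prim_expr_order pw) // /n; lia.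
  rewrite sqrf_eq1 => /orP[|/eqP //].
  rewrite -(expr0 w) (eq_prim_root_expr pw) mod0n modn_small /n; lia.
have unitn : forall y : algC, y ^+ n = -1 -> `|y| = 1.
  move=> y hy; apply/eqP; rewrite -(pexpr_eq1 n0) ?normr_ge0 // -normrX hy normrN normr1 //.
have conjinv : forall y : algC, y ^+ n = -1 -> y^* = y^-1.
  by move=> y hy; rewrite [y^-1]invC_norm unitn // expr1n invr1 mul1r.
have Re_le : forall y : algC, y ^+ n = -1 -> 'Re y <= 'Re a.
  move=> y hy; case: (real_ge0P (Creal_Im y)) => hI; first exact: rootC_Re_max.
  rewrite -Re_conj; apply: rootC_Re_max => //; first by rewrite -rmorphXn hy rmorphN1.
  by rewrite Im_conj oppr_ge0 ltW.
pose f (y : algC) := y + y^*.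
have fRe : forall y : algC, f y = 2 * 'Re y.
  move=> y; rewrite ReE mulrC divfK //; by rewrite pnatr_eq0.
have ainv : a^-1 = - a ^+ 3.
  apply: (mulfI (_ : a != 0)); first by apply: contra_eq_neq an => ->; rewrite expr0n gtn_eqF // eq_sym oppr_eq0 oner_eq0.
  rewrite divff; last by apply: contra_eq_neq an => ->; rewrite expr0n gtn_eqF // eq_sym oppr_eq0 oner_eq0.
  by rewrite mulrN -exprS a4 opprK.
have fa2 : f a ^+ 2 = 2.
  rewrite /f conjinv // ainv.
  have e : (a + - a ^+ 3) ^+ 2 = a ^+ 2 - 2 * a ^+ 4 + a ^+ 4 * a ^+ 2 by ring.
  by rewrite e a4; ring.
have fy2 : forall y : algC, y ^+ n = -1 -> f y ^+ 2 <= 2.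
  move=> y hy; have h1 := Re_le y hy.
  have h2 : 'Re (- y) <= 'Re a.
    apply: Re_le; rewrite exprNn hy -signr_odd /n oddM /=; by rewrite expr0 mul1r.
  rewrite raddfN /= in h2.
  rewrite -subr_ge0 -{1}fa2 (_ : f a ^+ 2 - f y ^+ 2 = (f a - f y) * (f a + f y)); last by ring.
  rewrite !fRe; apply: mulr_ge0.
    by rewrite -mulrBr; apply: mulr_ge0; [apply: ler0n | rewrite subr_ge0].
  rewrite -mulrDr; apply: mulr_ge0; [apply: ler0n|].
  by rewrite -(opprK ('Re y)) subr_ge0.
have key : forall y : algC, y ^+ n = -1 -> f y ^+ 2 * (2 - f y ^+ 2) =
    - (y ^+ 4 + 2 * y ^+ 2 + 2 + 2 * (y^*) ^+ 2 + (y^*) ^+ 4).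
  move=> y hy; rewrite /f conjinv //.
  have y0 : y != 0 by apply: contra_eq_neq hy => ->; rewrite expr0n gtn_eqF // eq_sym oppr_eq0 oner_eq0.
  by field.
pose y (k : 'I_(4*r)) := w ^+ (2 * k + 1).
have hy : forall k, y k ^+ n = -1.
  by move=> k; rewrite /y -exprM mulnC exprM w4 -signr_odd oddD oddM /= expr1.
have S0 : 0 <= \sum_k f (y k) ^+ 2 * (2 - f (y k) ^+ 2).
  apply: sumr_ge0 => k _; apply: mulr_ge0; last by rewrite subr_ge0; apply: fy2.
  have fr : (f (y k))^* = f (y k).
    by rewrite /f rmorphD /= addrC; congr (_ + _); apply: conjCK.
  by rewrite expr2 -{2}fr mul_conjC_ge0.
have s4 : \sum_k y k ^+ 4 = 0 by apply: sum_pow0 => //; lia.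
have s2 : \sum_k y k ^+ 2 = 0 by apply: sum_pow0 => //; lia.
have c4 : \sum_k (y k)^* ^+ 4 = 0.
  by rewrite (eq_bigr (fun k => (y k ^+ 4)^*)) => [|k _]; rewrite ?rmorphXn // -rmorph_sum s4 rmorph0.
have c2 : \sum_k (y k)^* ^+ 2 = 0.
  by rewrite (eq_bigr (fun k => (y k ^+ 2)^*)) => [|k _]; rewrite ?rmorphXn // -rmorph_sum s2 rmorph0.
move: S0; rewrite (eq_bigr _ (fun k _ => key _ (hy k))) sumrN !big_split /= -!mulr_sumr.
rewrite s4 s2 c4 c2 sumr_const card_ord !mulr0 !add0r addr0 oppr_ge0.
by rewrite addr0 -natrD -(mulr0n 1) ler_nat; lia.
Qed.

Lemma alpha_prim r : prime r -> odd r -> (8*r).-primitive_root ((4*r)%N.-root (-1:algC)).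
Proof.
move=> pr oddr; have a8 := @alpha8 r pr oddr.
set a := (4*r)%N.-root (-1 : algC) in a8 *.
have r2 : (2 < r)%N.
  have := prime_gt1 pr; rewrite leq_eqVlt => /orP[/eqP r2|//]. by rewrite -r2 in oddr.
have an : a ^+ (4*r) = -1 by apply: rootCK; lia.
have h8 : (0 < 8 * r)%N by lia.
have a8r : a ^+ (8 * r) = 1.
  have e : (8 * r = 4 * r * 2)%N by lia.
  by rewrite e exprM an sqrrN expr1n.
have [m pm mdiv] := prim_order_exists h8 a8r.
have n4 : ~~ (m %| 4 * r)%N.
  rewrite (prim_order_dvd pm) an; apply/negP.
  by rewrite -subr_eq0 -opprD oppr_eq0 (_ : 1 + 1 = 2%:R) // pnatr_eq0.
have n8 : ~~ (m %| 8)%N by rewrite (prim_order_dvd pm).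
suff e : m = (8 * r)%N by rewrite -e.
case: (boolP (r %| m)%N) => [/dvdnP[k km]|].
  subst m; move: mdiv n4 n8; rewrite !(mulnC _ r) !dvdn_pmul2l ?prime_gt0 //.
  move=> h1 h2 _; have := dvdn_leq (isT : (0 < 8)%N) h1.
  by clear pm; move: h1 h2; case: k => [|[|[|[|[|[|[|[|[|k]]]]]]]]] //; rewrite mulnC.
rewrite -prime_coprime // coprime_sym => cmr.
by move: mdiv; rewrite Gauss_dvdl // (negbTE n8).
Qed.

Lemma inv_exp (x : algC) r y : prime r -> x ^+ r = 1 -> ~~ (r %| y)%N ->
  exists e, (x ^+ y) ^+ e = x.
Proof.
move=> pr xr ry.
have [b _ hb] := Bezoutl y (prime_gt0 pr).
move: hb; have := ry; rewrite -prime_coprime // /coprime => /eqP -> /dvdnP[k hk].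
have x0 : x != 0 by apply: contra_eq_neq xr => ->; rewrite expr0n gtn_eqF ?prime_gt0 // eq_sym oner_eq0.
set z := x ^+ (b * y).
have zx : z * x = 1 by rewrite /z -exprSr -add1n hk mulnC exprM xr expr1n.
exists (b * (r - 1))%N; rewrite -exprM mulnA (mulnC y) exprM -/z.
have r1 : r = (r - 1).+1 by have := prime_gt0 pr; lia.
apply: (mulIf (_ : x ^+ (r - 1) != 0)); first by rewrite expf_neq0.
by rewrite -exprMn zx expr1n -exprS -r1 xr.
Qed.

Section Main.
Variables (r : nat) (pr : prime r) (oddr : odd r).
Local Notation a := (alpha_p (2 * r)).
Local Notation p := (2 * r)%N.

Lemma r3 : (2 < r)%N.
Proof. have := prime_gt1 pr; rewrite leq_eqVlt => /orP[/eqP r2|//]. by move: oddr; rewrite -r2. Qed.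

Lemma pa : (8 * r).-primitive_root a.
Proof. rewrite /alpha_p mulnA; exact: alpha_prim. Qed.

Lemma a4r : a ^+ (4 * r) = -1.
Proof.
have : (a ^+ (4 * r)) ^+ 2 == 1.
  have e : (4 * r * 2 = 8 * r)%N by lia.
  by rewrite -exprM e (prim_expr_order pa).
rewrite sqrf_eq1 => /orP[|/eqP //].
have := r3 => h; rewrite -(expr0 a) (eq_prim_root_expr pa) mod0n modn_small; lia.
Qed.

Lemma unit_a k : unit_Op p (a ^+ k).
Proof.
apply: (@unit_of _ _ (a ^+ ((8 * r - 1) * k))); try (apply: Op_exp; apply: Op_a).
have := r3 => h.
have e : (k + (8 * r - 1) * k = 8 * r * k)%N by nia.
by rewrite -exprD e exprM (prim_expr_order pa) expr1n.
Qed.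

Lemma Op_pow k : in_Op p (a ^+ k).
Proof. apply: Op_exp; apply: Op_a. Qed.


Ltac op := repeat first [apply: Op_add | apply: Op_mul | apply: Op_opp | apply: Op_1 | apply: Op_pow | assumption].

Lemma a8r : a ^+ (8 * r) = 1.
Proof. exact: (prim_expr_order pa). Qed.

Lemma case1 d s : odd d -> odd s -> ~~ (r %| d * s)%N ->
  unit_Op p (1 - a ^+ (2 * d * (2 * r + s))).
Proof.
move=> od os nrds; set w := a ^+ _.
set eta := - w ^+ 2.
have etar : eta ^+ r = 1.
  rewrite /eta exprNn -signr_odd oddr expr1 /w -!exprM.
  have e : (2 * d * (2 * r + s) * 2 * r = 4 * r * (d * (2 * r + s)))%N by nia.
  rewrite e exprM a4r -signr_odd oddM od oddD oddM /= os expr1.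
  by rewrite mulrNN mul1r.
have eta1 : eta != 1.
  apply/negP => /eqP h.
  have : a ^+ (4 * (2 * d * (2 * r + s))) == 1.
    have e4 : w ^+ 4 = eta ^+ 2.
      by rewrite /eta sqrrN /w -!exprM; congr (_ ^+ _); nia.
    by rewrite (mulnC 4) exprM -/w e4 h expr1n.
  rewrite -(prim_order_dvd pa) (_ : (4 * (2 * d * (2 * r + s)) = 8 * (r * (2 * d) + d * s))%N); last by nia.
  rewrite (mulnC 8 r) (mulnC 8 (_ + _)) dvdn_pmul2r // (dvdn_addr _ (dvdn_mulr _ (dvdnn r))).
  by rewrite (negbTE nrds).
have hx : in_Op p eta by rewrite /eta /w; op.
have hpow : (eta ^+ 2) ^+ (r./2).+1 = eta.
  have e3 : (2 * (r./2).+1 = r.+1)%N.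
    have := odd_double_half r; rewrite oddr -muln2 => h; lia.
  by rewrite -exprM e3 exprSr etar mul1r.
have [u [hu e]] := @assoc_pow p eta 2 (r./2).+1 hx eta1 hpow.
have e1 : 1 - eta != 0 by rewrite subr_eq0 eq_sym.
have e2 : 1 + eta = u.
  apply: (mulIf e1); rewrite -e mulrC.
  by rewrite /eta; ring.
case: hu => _ [u0 hu'].
apply: (@unit_of _ _ ((1 + w) * u^-1)); first by op.
  by op.
rewrite mulrA (_ : (1 - w) * (1 + w) = 1 + eta); first by rewrite e2 divff.
by rewrite /eta; ring.
Qed.


Lemma case2 d s : odd d -> odd s -> (r %| d * s)%N ->
  exists u, unit_Op p u /\ 1 - a ^+ (2 * d * (2 * r + s)) = u * sqrtC 2.
Proof.
move=> od os /dvdnP[t ht].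
have ot : odd t by move: (oddM d s); rewrite od os ht oddM oddr andbT.
set g := a ^+ (2 * r).
have g2 : g ^+ 2 = -1.
  by rewrite /g -exprM (_ : (2 * r * 2 = 4 * r)%N) ?a4r //; lia.
set e := (d + t./2)%N.
have ew : a ^+ (2 * d * (2 * r + s)) = (-1) ^+ e * g.
  have h := odd_double_half t; rewrite ot -muln2 in h.
  have e1 : (2 * d * (2 * r + s) = 2 * r * (2 * e) + 2 * r)%N.
    rewrite /e; nia.
  by rewrite e1 exprD -/g exprM -/g exprM g2.
set s2 := a ^+ r - a ^+ (3 * r).
have s2e : s2 = a ^+ r * (1 - g).
  have e3 : (r + 2 * r = 3 * r)%N by lia.
  by rewrite mulrBr mulr1 /g -exprD e3.
have s22 : s2 ^+ 2 = 2.
  have ag : (a ^+ r) ^+ 2 = g by rewrite /g -exprM mulnC.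
  have : s2 ^+ 2 = - 2 * g ^+ 2 + g * (1 + g ^+ 2) by rewrite s2e exprMn ag; ring.
  by rewrite g2 => ->; ring.
have hv : exists v, unit_Op p v /\ 1 - a ^+ (2 * d * (2 * r + s)) = v * s2.
  have a7 : a ^+ (7 * r) * a ^+ r = 1 by rewrite -exprD (_ : (7 * r + r = 8 * r)%N) ?a8r //; lia.
  rewrite ew -signr_odd; case: (odd e); rewrite ?expr0 ?expr1.
    exists (g * a ^+ (7 * r)); split; first by apply: unit_mul; apply: unit_a.
    rewrite s2e mulrA -(mulrA g) a7 mulr1.
    have : 1 + g = g * (1 - g) by rewrite mulrBr mulr1 -expr2 g2 opprK addrC.
    by rewrite mulN1r opprK.
  exists (a ^+ (7 * r)); split; first exact: unit_a.
  by rewrite s2e mulrA a7 mul1r mul1r.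
have hs : exists v, unit_Op p v /\ s2 = v * sqrtC 2.
  have : (sqrtC 2 - s2) * (sqrtC 2 + s2) == 0.
    have e4 : (sqrtC 2 - s2) * (sqrtC 2 + s2) = sqrtC 2 ^+ 2 - s2 ^+ 2 by ring.
    by rewrite e4 sqrtCK s22 subrr.
  rewrite mulf_eq0 subr_eq0 addr_eq0 => /orP[] /eqP ->.
    by exists 1; split; [apply: (@unit_of _ _ 1); op; rewrite mulr1 | rewrite mul1r].
  by exists (-1); split; [apply: unit_N1 | rewrite mulN1r opprK].
have [v [hv1 hv2]] := hv; have [v' [hv1' hv2']] := hs.
exists (v * v'); split; first exact: unit_mul.
by rewrite hv2 hv2' mulrA.
Qed.


Lemma case3 d s : (0 < d < r)%N -> (0 < s < r)%N ->
  exists u, unit_Op p u /\ 1 - a ^+ (2 * (2 * d) * (2 * r + 2 * s)) = u * (1 + a ^+ 4).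
Proof.
move=> /andP[d0 dr] /andP[s0 sr].
set xi := a ^+ 8.
have xir : xi ^+ r = 1 by rewrite /xi -exprM a8r.
set h := (r./2).+1.
have hr : (2 * h = r + 1)%N by have := odd_double_half r; rewrite oddr -muln2 /h => e; lia.
have xh : xi ^+ h = - a ^+ 4.
  rewrite /xi -exprM (_ : (8 * h = 4 * r + 4)%N); last by lia.
  by rewrite exprD a4r mulN1r.
set X := (d * (r + s))%N.
have ew : a ^+ (2 * (2 * d) * (2 * r + 2 * s)) = xi ^+ X.
  by rewrite /xi -exprM; congr (_ ^+ _); rewrite /X; nia.
have rX : ~~ (r %| X)%N.
  rewrite /X Euclid_dvdM // (dvdn_addr _ (dvdnn r)); apply/norP; split.
    by apply/negP => /(dvdn_leq d0); lia.
  by apply/negP => /(dvdn_leq s0); lia.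
have [e he] := @inv_exp xi r X pr xir rX.
have hx : in_Op p (xi ^+ h) by rewrite /xi -exprM; op.
have x1 : xi ^+ h != 1.
  rewrite /xi -exprM -(prim_order_dvd pa) dvdn_pmul2l //.
  by apply/negP => /(dvdn_leq (ltn0Sn _)); have := r3; lia.
have e2 : (xi ^+ h) ^+ (2 * X) = xi ^+ X.
  have e5 : (h * (2 * X) = r * X + X)%N by nia.
  by rewrite -exprM e5 exprD exprM xir expr1n mul1r.
have hpow : ((xi ^+ h) ^+ (2 * X)) ^+ (e * h) = xi ^+ h by rewrite e2 exprM he.
have [u [hu eu]] := @assoc_pow p (xi ^+ h) (2 * X) (e * h) hx x1 hpow.
exists u; split => //.
by rewrite ew -e2 eu xh opprK.
Qed.


Lemma mu_diff i j : (j < i)%N -> mu p i - mu p j =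
  - a ^+ (4 * r * j + 2 * (j * (j + 2))) * (1 - a ^+ (2 * (i - j) * (2 * r + (i + j + 2)))).
Proof.
move=> ji; rewrite /mu /A_p -a4r -!exprM -!exprD.
have e : (4 * r * i + 2 * (i * (i + 2)) =
   (4 * r * j + 2 * (j * (j + 2))) + 2 * (i - j) * (2 * r + (i + j + 2)))%N.
  have -> : i = (j + (i - j))%N by lia.
  move: (i - j)%N => k; rewrite addKn; ring.
rewrite e exprD; ring.
Qed.

Lemma core i j : (i <= r - 2)%N -> (j <= r - 2)%N -> (j < i)%N ->
 [/\ odd (i - j) -> ~~ (r %| (i - j) * (i + j + 2))%N ->
       exists u, unit_Op p u /\ mu p i - mu p j = u * 1,
     odd (i - j) -> (r %| (i - j) * (i + j + 2))%N ->
       exists u, unit_Op p u /\ mu p i - mu p j = u * sqrtC 2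
   & ~~ odd (i - j) -> exists u, unit_Op p u /\ mu p i - mu p j = u * (1 + a ^+ 4)].
Proof.
move=> hi hj ji; rewrite mu_diff //.
set w := - a ^+ (4 * r * j + 2 * (j * (j + 2))).
have hw : unit_Op p w by rewrite /w -mulN1r; apply: unit_mul; [apply: unit_N1 | apply: unit_a].
have os : odd (i + j + 2) = odd (i - j).
  have e : (i + j + 2 = (i - j) + 2 * (j + 1))%N.
    have -> : i = (j + (i - j))%N by lia.
    move: (i - j)%N => k; rewrite addKn; ring.
  by rewrite e oddD oddM /= addbF.
split.
- move=> od nd; exists (w * (1 - a ^+ (2 * (i - j) * (2 * r + (i + j + 2))))); split; last by rewrite mulr1.
  by apply: unit_mul => //; apply: case1 => //; rewrite os.
- move=> od nd; have os' : odd (i + j + 2) by rewrite os.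
  have [u [hu e]] := @case2 (i - j) (i + j + 2) od os' nd.
  by exists (w * u); split; [apply: unit_mul | rewrite e mulrA].
- move=> ev.
  have hd := odd_double_half (i - j); rewrite (negbTE ev) add0n -muln2 in hd.
  have hs := odd_double_half (i + j + 2); rewrite os (negbTE ev) add0n -muln2 in hs.
  set d' := ((i - j)./2)%N in hd; set s' := ((i + j + 2)./2)%N in hs.
  have r2 := r3.
  have b1 : (0 < d' < r)%N by apply/andP; split; lia.
  have b2 : (0 < s' < r)%N by apply/andP; split; lia.
  have [u [hu e]] := @case3 d' s' b1 b2.
  have eq : (2 * (2 * d') * (2 * r + 2 * s') = 2 * (i - j) * (2 * r + (i + j + 2)))%N.
    by rewrite (mulnC 2 d') hd (mulnC 2 s') hs.
  by exists (w * u); split; [apply: unit_mul | rewrite -eq e mulrA].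
Qed.

End Main.

Lemma finish p x T u : T != 0 -> unit_Op p u -> x = u * T -> assoc_Op p x T.
Proof. by move=> T0 hu ->; split => //; rewrite mulfK. Qed.

Theorem lemma3p2 (r : nat) (hr : prime r) (hodd : odd r) (i j : nat)
  (hi : (i <= r - 2)%N) (hj : (j <= r - 2)%N) (hij : i != j) :
  let p := (2 * r)%N in
  let c := ((j%:Z - i%:Z) * (i + j + 2)%:Z)%R in
  [/\ (odd i != odd j) -> ~~ (r%:Z %| c)%Z ->
        assoc_Op p (mu p i - mu p j) 1,
      (odd i != odd j) -> (r%:Z %| c)%Z ->
        assoc_Op p (mu p i - mu p j) (sqrtC 2)
    & (odd i = odd j) ->
        assoc_Op p (mu p i - mu p j) (1 + alpha_p p ^+ 4)].
Proof.
move=> p c.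
have r2 := @r3 r hr hodd.
have T1 : (1 : algC) != 0 by rewrite oner_neq0.
have T2 : sqrtC (2 : algC) != 0 by rewrite sqrtC_eq0 pnatr_eq0.
have T3 : 1 + alpha_p p ^+ 4 != 0.
  rewrite addrC addr_eq0 -(@a4r r hr hodd) (eq_prim_root_expr (@pa r hr hodd)) !modn_small; lia.
have oddE : forall x y : nat, (y < x)%N -> (odd x != odd y) = odd (x - y).
  by move=> x y yx; rewrite (oddB (ltnW yx)); case: (odd x); case: (odd y).
case: (ltngtP i j) => [ij|ji|eij]; last by rewrite eij eqxx in hij.
- have hc : (r%:Z %| c)%Z = (r %| (j - i) * (j + i + 2))%N.
    by rewrite /c dvdzE abszM subzn ?(ltnW ij) // (addnC j i).
  have [C1 C2 C3] := @core r hr hodd j i hj hi ij.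
  have flip : forall T, (exists u, unit_Op p u /\ mu p j - mu p i = u * T) ->
      T != 0 -> assoc_Op p (mu p i - mu p j) T.
    move=> T [u [hu e]] T0; apply: (@finish _ _ _ (-1 * u)) => //.
      by apply: unit_mul => //; apply: unit_N1.
    by rewrite -mulrA -e mulN1r opprB.
  split.
  + move=> od nd; apply: flip => //; apply: C1; [by rewrite -(oddE j i ij) eq_sym | by rewrite -hc].
  + move=> od nd; apply: flip => //; apply: C2; [by rewrite -(oddE j i ij) eq_sym | by rewrite -hc].
  + by move=> ev; apply: flip => //; apply: C3; rewrite -(oddE j i ij) ev eqxx.
- have hc : (r%:Z %| c)%Z = (r %| (i - j) * (i + j + 2))%N.
    by rewrite /c dvdzE abszM -opprB subzn ?(ltnW ji) // abszN.
  have [C1 C2 C3] := @core r hr hodd i j hi hj ji.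
  have fin : forall T, (exists u, unit_Op p u /\ mu p i - mu p j = u * T) ->
      T != 0 -> assoc_Op p (mu p i - mu p j) T.
    by move=> T [u [hu e]] T0; apply: (@finish _ _ _ u).
  split.
  + move=> od nd; apply: fin => //; apply: C1; [by rewrite -(oddE i j ji) | by rewrite -hc].
  + move=> od nd; apply: fin => //; apply: C2; [by rewrite -(oddE i j ji) | by rewrite -hc].
  + by move=> ev; apply: fin => //; apply: C3; rewrite -(oddE i j ji) ev eqxx.
Qed.
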